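(* Let $\mathcal{F}$ be an argumentation framework and $S\subseteq A_{\mathcal{F}}$. For each $a\in A_{\mathcal{F}}$ and each ordinal $\alpha$, $$C^\alpha_S(a)=\{b: a\Rightarrow^{A_{\mathcal{F}}\setminus\Delta^\alpha_{\mathcal{F},S}}_{\mathcal{F}}b\ \text{ and }\ b\Rightarrow^{A_{\mathcal{F}}\setminus\Delta^\alpha_{\mathcal{F},S}}_{\mathcal{F}}a\}.$$
   Context: An argumentation framework is $\mathcal{F}=(A_{\mathcal{F}},R_{\mathcal{F}})$ with $R_{\mathcal{F}}\subseteq A_{\mathcal{F}}\times A_{\mathcal{F}}$; $a\rightarrow b$ means $(a,b)\in R_{\mathcal{F}}$. $\mathcal{F}|_B=(A_{\mathcal{F}}\cap B,R_{\mathcal{F}}\cap(B\times B))$. $\mathrm{SCC}(a)$ is the set of $b$ with directed attack paths (possibly of length 0) from $a$ to $b$ and from $b$ to $a$. $D_S(X)=\{b\in X:\exists a\in S\setminus X,\ a\rightarrow b\}$. $C^0_S(a)=\mathrm{SCC}(a)$; $C^{\alpha+1}_S(a)$ = the strongly connected component of $a$ in $\mathcal{F}|_{C^\alpha_S(a)\setminus D_S(C^\alpha_S(a))}$ (empty if $a$ is not in that set); for limit $\lambda$, $C^\lambda_S(a)$ = the strongly connected component of $a$ in $\mathcal{F}|_{\bigcap_{\alpha<\lambda}C^\alpha_S(a)}$. $a\Rightarrow^B_{\mathcal{F}}b$ ($b$ reachable from $a$ modulo $B$) means there is a directed attack path from $a$ to $b$ in $\mathcal{F}|_B$. For $D\subseteq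 A_{\mathcal{F}}$, $\Delta_{\mathcal{F},S}(D)=\{a\in A_{\mathcal{F}}:\exists b\in S\,(b\rightarrow a\text{ and not }a\Rightarrow^{A_{\mathcal{F}}\setminus D}_{\mathcal{F}}b)\}$. The iterates are $\Delta^0_{\mathcal{F},S}=\emptyset$, $\Delta^{\alpha+1}_{\mathcal{F},S}=\Delta_{\mathcal{F},S}(\Delta^\alpha_{\mathcal{F},S})$, and $\Delta^\lambda_{\mathcal{F},S}=\bigcup_{\alpha<\lambda}\Delta^\alpha_{\mathcal{F},S}$ for limit $\lambda$. *)

(* Defs.v *)
(* Argumentation frameworks over an arbitrary (possibly infinite)
   carrier type T: A_F = all of T, attack relation R : T -> T -> Prop.
   Sets are predicates T -> Prop.  Ordinals are represented by elements of an
   arbitrary well-ordered type (O, lt); transfinite sequences are defined by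
   well-founded recursion along lt. *)
From Stdlib Require Import Relations Wellfounded.

Section AF.
Variable T : Type.
Variable R : T -> T -> Prop.

Definition edge_in (B : T -> Prop) (x y : T) : Prop := B x /\ B y /\ R x y.

(* a =>^B_F b : directed attack path (possibly of length 0) from a to b in F|_B *)
Definition reach (B : T -> Prop) (a b : T) : Prop :=
  B a /\ clos_refl_trans T (edge_in B) a b.

(* strongly connected component of a in F|_B (empty if a is not in B) *)
Definition scc_in (B : T -> Prop) (a b : T) : Prop := reach B a b /\ reach B b a.

Definition DS (S X : T -> Prop) : T -> Prop :=
  fun b => X b /\ exists a, S a /\ ~ X a /\ R a b.

Definition Delta_step (S D : T -> Prop) : T -> Prop :=
  fun a => exists b, S b /\ R b a /\ ~ reach (fun x => ~ D x) a b.

Variable O : Type.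
Variable lt : O -> O -> Prop.
Hypothesis wf : well_founded lt.

Definition is_pred (beta alpha : O) : Prop :=
  lt beta alpha /\ forall g, lt g alpha -> g = beta \/ lt g beta.

(* Delta^alpha_{F,S}: empty at 0, Delta_step of the predecessor at successors,
   union of earlier stages at limits (0 is covered by the empty union). *)
Definition Delta_iter (S : T -> Prop) : O -> T -> Prop :=
  Fix wf (fun _ => T -> Prop)
    (fun alpha rec x =>
       (exists beta (h : lt beta alpha), is_pred beta alpha /\ Delta_step S (rec beta h) x)
       \/ ((~ exists beta, is_pred beta alpha) /\
           exists beta (h : lt beta alpha), rec beta h x)).

(* C^alpha_S(a): SCC(a) at 0; SCC of a in F|_{C \ D_S(C)} at successors;
   SCC of a in F|_{intersection of earlier stages} at limits (the empty
   intersection at 0 is all of A_F, giving SCC(a)). *)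
Definition C_iter (S : T -> Prop) (a : T) : O -> T -> Prop :=
  Fix wf (fun _ => T -> Prop)
    (fun alpha rec b =>
       (exists beta (h : lt beta alpha), is_pred beta alpha /\
          scc_in (fun x => rec beta h x /\ ~ DS S (rec beta h) x) a b)
       \/ ((~ exists beta, is_pred beta alpha) /\
           scc_in (fun x => forall beta (h : lt beta alpha), rec beta h x) a b)).
End AF.

(* Main.v *)
Require Import Defs.
From Stdlib Require Import Relations Wellfounded.
From Stdlib Require Import Classical FunctionalExtensionality PropExtensionality.

Section Graph.
Variable T : Type.
Variable R : T -> T -> Prop.

Lemma rt_mono (B B' : T -> Prop) : (forall x, B x -> B' x) ->
  forall u v, clos_refl_trans T (edge_in T R B) u v -> clos_refl_trans T (edge_in T R B') u v.
Proof.
  intros HB u v H; induction H.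
  - apply rt_step. destruct H as [h1 [h2 h3]]. repeat split; auto.
  - apply rt_refl.
  - eapply rt_trans; eauto.
Qed.

Lemma reach_mono (B B' : T -> Prop) : (forall x, B x -> B' x) ->
  forall u v, reach T R B u v -> reach T R B' u v.
Proof. intros HB u v [h1 h2]. split; auto. eapply rt_mono; eauto. Qed.

Lemma scc_mono (B B' : T -> Prop) : (forall x, B x -> B' x) ->
  forall u v, scc_in T R B u v -> scc_in T R B' u v.
Proof. intros HB u v [h1 h2]. split; eapply reach_mono; eauto. Qed.

Lemma reach_end (B : T -> Prop) u v : reach T R B u v -> B v.
Proof.
  intros [h1 h2]. induction h2; auto.
  destruct H as [_ [h _]]; auto.
Qed.

Lemma reach_trans (B : T -> Prop) u v w : reach T R B u v -> reach T R B v w -> reach T R B u w.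
Proof. intros [h1 h2] [h3 h4]. split; auto. eapply rt_trans; eauto. Qed.

Lemma scc_confine (B : T -> Prop) a b : scc_in T R B a b ->
  scc_in T R (fun x => B x /\ scc_in T R B a x) a b.
Proof.
  intros [Hab Hba].
  assert (Ba : B a) by (destruct Hab; auto).
  assert (Paa : scc_in T R B a a) by (split; split; auto; apply rt_refl).
  assert (claim : forall u v, clos_refl_trans T (edge_in T R B) u v ->
     scc_in T R B a u -> reach T R B v a ->
     clos_refl_trans T (edge_in T R (fun x => B x /\ scc_in T R B a x)) u v).
  { intros u v H. apply clos_rt_rt1n in H. induction H; intros Pu Hva.
    - apply rt_refl.
    - assert (Hyz : reach T R B y z).
      { split. destruct H as [_ [h _]]; auto. apply clos_rt1n_rt; auto. }
      assert (Py : scc_in T R B a y).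
      { destruct Pu as [Pu1 Pu2]. split.
        + apply (reach_trans _ a x y Pu1). split. destruct H as [h _]; exact h. apply rt_step; auto.
        + apply (reach_trans _ y z a Hyz Hva). }
      eapply rt_trans; [apply rt_step | apply IHclos_refl_trans_1n; auto].
      destruct H as [h1 [h2 h3]]. split; [split; assumption | split; [split; assumption | assumption]]. }
  assert (Pb : scc_in T R B a b) by (split; auto).
  split; split.
  - split; auto.
  - apply claim; auto. destruct Hab; auto.
  - split; auto. eapply reach_end; eauto.
  - apply claim; auto. destruct Hba; auto. split; auto. apply rt_refl.
Qed.

Lemma scc_equiv (B B' : T -> Prop) a :
  (forall x, B x -> scc_in T R B a x -> B' x) ->
  (forall x, B' x -> scc_in T R B' a x -> B x) ->
  forall b, scc_in T R B a b <-> scc_in T R B' a b.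
Proof.
  intros H1 H2 b; split; intro H.
  - apply scc_confine in H. eapply scc_mono; [|exact H]. intros x [h1 h2]; auto.
  - apply scc_confine in H. eapply scc_mono; [|exact H]. intros x [h1 h2]; auto.
Qed.

Lemma scc_src (B : T -> Prop) a x : scc_in T R B a x -> B x.
Proof. intros [_ [h _]]; auto. Qed.

Lemma step_mono S (D D' : T -> Prop) : (forall x, D x -> D' x) ->
  forall x, Delta_step T R S D x -> Delta_step T R S D' x.
Proof.
  intros HD x [c [h1 [h2 h3]]]. exists c; repeat split; auto.
  intro Hr; apply h3. eapply reach_mono; [|exact Hr]. intros y hy hy'; apply hy; auto.
Qed.

Lemma succ_case S (D : T -> Prop) a :
  (forall x, D x -> Delta_step T R S D x) ->
  forall b,
  scc_in T R (fun x => scc_in T R (fun y => ~ D y) a x /\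
                       ~ DS T R S (scc_in T R (fun y => ~ D y) a) x) a b
  <-> scc_in T R (fun x => ~ Delta_step T R S D x) a b.
Proof.
  intros Hmono. apply scc_equiv.
  - intros x [Xx nDS] _ [c [Sc [Rcx nr]]].
    destruct (classic (scc_in T R (fun y => ~ D y) a c)) as [Xc|nXc].
    + apply nr. destruct Xx, Xc. eapply reach_trans; eauto.
    + apply nDS. split; auto. exists c; auto.
  - intros x nst Hsc.
    assert (Xx : scc_in T R (fun y => ~ D y) a x).
    { eapply scc_mono; [|exact Hsc]. intros y hy hD; apply hy; auto. }
    split; auto.
    intros [_ [c [Sc [nXc Rcx]]]]. apply nXc.
    assert (Hr : reach T R (fun y => ~ D y) x c).
    { apply NNPP; intro nr; apply nst. exists c; auto. }
    assert (nDc : ~ D c) by exact (reach_end _ x c Hr).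
    assert (nDx : ~ D x) by exact (scc_src _ a x Xx).
    destruct Xx as [Hax Hxa]. split.
    + eapply reach_trans; eauto.
    + eapply reach_trans; [|exact Hxa]. split; auto. apply rt_step. repeat split; auto.
Qed.

Lemma lim_case (O : Type) (lt : O -> O -> Prop) alpha (D : O -> T -> Prop) a b :
  scc_in T R (fun x => forall beta, lt beta alpha -> scc_in T R (fun y => ~ D beta y) a x) a b
  <-> scc_in T R (fun x => ~ exists beta, lt beta alpha /\ D beta x) a b.
Proof.
  apply scc_equiv.
  - intros x H _ [beta [h1 h2]]. specialize (H beta h1). apply scc_src in H. auto.
  - intros x H Hs beta hb. eapply scc_mono; [|exact Hs].
    intros y hy hd; apply hy; eauto.
Qed.
End Graph.

Theorem lemma2 (T : Type) (R : T -> T -> Prop) (S : T -> Prop)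
  (O : Type) (lt : O -> O -> Prop) (wf : well_founded lt)
  (lt_trans : forall x y z, lt x y -> lt y z -> lt x z)
  (lt_total : forall x y, lt x y \/ x = y \/ lt y x)
  (a : T) (alpha : O) :
  forall b : T,
    @C_iter T R O lt wf S a alpha b <->
    @scc_in T R (fun x => ~ @Delta_iter T R O lt wf S alpha x) a b.
Proof.
  assert (irr : forall x, ~ lt x x).
  { intro x. induction (wf x) as [x _ IH]. intro h. exact (IH x h h). }
  assert (uniq : forall b1 b2 al, is_pred O lt b1 al -> is_pred O lt b2 al -> b1 = b2).
  { intros b1 b2 al [l1 p1] [l2 p2].
    destruct (p1 b2 l2) as [e|h1]; auto.
    destruct (p2 b1 l1) as [e|h2]; auto.
    exfalso; apply (irr b1); eauto. }
  assert (DU : forall al, Delta_iter T R O lt wf S al = fun x =>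
       (exists beta (h : lt beta al), is_pred O lt beta al /\
          Delta_step T R S (Delta_iter T R O lt wf S beta) x)
       \/ ((~ exists beta, is_pred O lt beta al) /\
           exists beta (h : lt beta al), Delta_iter T R O lt wf S beta x)).
  { intro al. unfold Delta_iter at 1. rewrite Fix_eq. reflexivity.
    intros x f g Hfg. assert (f = g) by
      (extensionality y; extensionality p; auto). subst; reflexivity. }
  assert (CU : forall al, C_iter T R O lt wf S a al = fun b =>
       (exists beta (h : lt beta al), is_pred O lt beta al /\
          scc_in T R (fun x => C_iter T R O lt wf S a beta x /\
                 ~ DS T R S (C_iter T R O lt wf S a beta) x) a b)
       \/ ((~ exists beta, is_pred O lt beta al) /\
           scc_in T R (fun x => forall beta (h : lt beta al),
                 C_iter T R O lt wf S a beta x) a b)).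
  { intro al. unfold C_iter at 1. rewrite Fix_eq. reflexivity.
    intros x f g Hfg. assert (f = g) by
      (extensionality y; extensionality p; auto). subst; reflexivity. }
  assert (Mono : forall al x, Delta_iter T R O lt wf S al x ->
            Delta_step T R S (Delta_iter T R O lt wf S al) x).
  { intro al. induction (wf al) as [al _ IH]. intros x Hx.
    rewrite DU in Hx. destruct Hx as [[beta [h [hp Hs]]]|[np [beta [h Hb]]]].
    - eapply step_mono; [|exact Hs]. intros y hy. rewrite DU. left.
      exists beta, h; split; auto.
    - eapply step_mono; [|apply (IH beta h _ Hb)]. intros y hy. rewrite DU. right.
      split; auto. exists beta, h; auto. }
  induction (wf alpha) as [al _ IH]. intro b.
  rewrite CU.
  destruct (classic (exists beta, is_pred O lt beta al)) as [[beta hp]|np].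
  - assert (EC : C_iter T R O lt wf S a beta =
                 scc_in T R (fun x => ~ Delta_iter T R O lt wf S beta x) a).
    { extensionality y. apply propositional_extensionality. apply IH. destruct hp; auto. }
    assert (ED : (fun x => ~ Delta_iter T R O lt wf S al x) =
                 (fun x => ~ Delta_step T R S (Delta_iter T R O lt wf S beta) x)).
    { extensionality y. apply propositional_extensionality. rewrite DU. split.
      - intros H1 H2; apply H1. left. exists beta. exists (proj1 hp). auto.
      - intros H1 [[b' [h [hp' H2]]]|[H2 _]].
        + apply H1. rewrite (uniq beta b' al hp hp'). auto.
        + apply H2; eauto. }
    rewrite ED, <- (succ_case T R S _ a (Mono beta) b), <- EC.
    split.
    + intros [[b' [h [hp' H2]]]|[H2 _]].
      * rewrite (uniq beta b' al hp hp'). auto.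
      * exfalso; apply H2; eauto.
    + intro H. left. exists beta, (proj1 hp). auto.
  - assert (ED : (fun x => ~ Delta_iter T R O lt wf S al x) =
                 (fun x => ~ exists beta, lt beta al /\ Delta_iter T R O lt wf S beta x)).
    { extensionality y. apply propositional_extensionality. rewrite DU. split.
      - intros H1 [beta [h H2]]; apply H1. right. split; auto. exists beta, h; auto.
      - intros H1 [[b' [h [hp' H2]]]|[_ [beta [h H2]]]].
        + apply np; eauto.
        + apply H1; eauto. }
    rewrite ED, <- lim_case.
    assert (EB : (fun x => forall beta (h : lt beta al), C_iter T R O lt wf S a beta x) =
       (fun x => forall beta, lt beta al ->
           scc_in T R (fun y => ~ Delta_iter T R O lt wf S beta y) a x)).
    { extensionality y. apply propositional_extensionality.
      split; intros H beta h; apply IH; auto. }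
    rewrite EB. split.
    + intros [[b' [h [hp' H2]]]|[_ H2]]; auto. exfalso; apply np; eauto.
    + intro H; right; auto.
Qed.
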